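(* Let $X$ be a finite connected simplicial complex and $\delta$ a cellular perversity, with $\ge$ denoting the order of $\Lambda(X,\delta)$. (a) If $\Delta\leftrightarrow\Delta'$ and $\delta(\Delta)\ge\delta(\Delta')$, then $\Delta\ge\Delta'$; moreover a defining sequence $\Delta=\Delta_0,\dots,\Delta_r=\Delta'$ can be chosen with $\Delta\leftrightarrow\Delta_i\leftrightarrow\Delta'$ for all $i$. (b) If $\Delta\ge\Delta'$ and either $\delta(\Delta)\ge\delta(\Delta')\ge0$ or $0\ge\delta(\Delta)\ge\delta(\Delta')$, then $\Delta\leftrightarrow\Delta'$. (c) If $\Delta>\Delta'$ and $\Delta$, $\Delta'$ are not incident, then $\delta(\Delta)>0$ and $\delta(\Delta')<0$; if moreover $\delta(\Delta)-\delta(\Delta')=2$, then $\delta(\Delta)=1$ and $\delta(\Delta')=-1$.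
   Context: Simplices of $X$ are open; $\Delta\leftrightarrow\Delta'$ (incident) means one is a face of the other. A cellular perversity is $\delta:\mathbb Z_{\ge0}\to\mathbb Z$ with $\delta(0)=0$ mapping every $\{0,\dots,k\}$ bijectively onto an interval $\{a,\dots,a+k\}$, $a\le0$; $\delta(\Delta):=\delta(\dim\Delta)$. $\Lambda(X,\delta)$ is the set of simplices of $X$ ordered by: $\Delta\ge\Delta'$ iff there is a sequence $\Delta=\Delta_0,\Delta_1,\dots,\Delta_r=\Delta'$ ($r\ge0$) with $\Delta_i\leftrightarrow\Delta_{i+1}$ and $\delta(\Delta_i)=\delta(\Delta_{i+1})+1$ for all $0\le i\le r-1$. *)

(* Defs.v *)
From mathcomp Require Import all_boot all_order all_algebra.
Set Implicit Arguments. Unset Strict Implicit. Unset Printing Implicit Defensive.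
Import Order.TTheory GRing.Theory Num.Theory.
Local Open Scope ring_scope.

Definition simplicial_complex (V : finType) (X : {set {set V}}) : Prop :=
  set0 \notin X /\
  forall D E : {set V}, D \in X -> E \subset D -> E != set0 -> E \in X.

Definition sdim (V : finType) (D : {set V}) : nat := (#|D|).-1.

Definition incident (V : finType) (D E : {set V}) : bool :=
  (D \subset E) || (E \subset D).

(* Connectedness: any two simplices are joined by a chain of incident
   simplices of X (X nonempty). Equivalent to connectedness of |X|. *)
Definition sc_connected (V : finType) (X : {set {set V}}) : Prop :=
  X != set0 /\
  forall D E, D \in X -> E \in X ->
    exists s : seq {set V}, all (mem X) s /\ path (@incident V) D s /\ last D s = E.

Definition cellular_perversity (delta : nat -> int) : Prop :=
  delta 0%N = 0 /\
  forall k : nat, exists a : int,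
    a <= 0 /\
    (forall i : nat, (i <= k)%N -> a <= delta i <= a + k%:Z) /\
    (forall i j : nat, (i <= k)%N -> (j <= k)%N -> delta i = delta j -> i = j) /\
    (forall z : int, a <= z <= a + k%:Z -> exists2 i : nat, (i <= k)%N & delta i = z).

Definition pdelta (V : finType) (delta : nat -> int) (D : {set V}) : int :=
  delta (sdim D).

Definition lstep (V : finType) (delta : nat -> int) (D E : {set V}) : bool :=
  incident D E && (pdelta delta D == pdelta delta E + 1).

Definition lge (V : finType) (X : {set {set V}}) (delta : nat -> int)
    (D E : {set V}) : Prop :=
  exists s : seq {set V},
    all (mem X) s /\ path (lstep delta) D s /\ last D s = E.

Definition lgt (V : finType) (X : {set {set V}}) (delta : nat -> int)
    (D E : {set V}) : Prop := lge X delta D E /\ D <> E.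

(* Main.v *)
Require Import Defs.
From mathcomp Require Import all_boot all_order all_algebra.
From mathcomp Require Import zify.
Set Implicit Arguments. Unset Strict Implicit.
Import Order.TTheory GRing.Theory Num.Theory.
Local Open Scope ring_scope.

Lemma cp_between (delta : nat -> int) (i j : nat) :
  cellular_perversity delta -> (j < i)%N ->
  (delta j <= delta i <= 0) \/ (0 <= delta i <= delta j) -> False.
Proof.
move=> [d0 H] ji hb.
have [a [a0 [Hr [_ Hs]]]] := H i.-1.
have [b [b0 [_ [Hi _]]]] := H i.
have := Hr 0%N (leq0n _); have := Hr j ltac:(lia).
rewrite d0 => /andP[h1 h2] /andP[h3 h4].
have [m Hm Hdm] : exists2 m : nat, (m <= i.-1)%N & delta m = delta i.
  apply: Hs; apply/andP; split; lia.
have := Hi m i ltac:(lia) (leqnn _) Hdm. lia.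
Qed.

Lemma cp_pos (delta : nat -> int) (i j : nat) :
  cellular_perversity delta -> 0 <= delta j -> delta j < delta i -> (j < i)%N.
Proof.
move=> Hd h1 h2; case: (ltnP j i) => // ij.
case: (ltngtP i j) => [ij'||e]; last by rewrite e in h2; lia.
- exfalso; apply: (@cp_between delta j i Hd ij'); right; lia.
- lia.
Qed.

Lemma cp_neg (delta : nat -> int) (i j : nat) :
  cellular_perversity delta -> delta i <= 0 -> delta j < delta i -> (i < j)%N.
Proof.
move=> Hd h1 h2; case: (ltnP i j) => // ij.
case: (ltngtP i j) => [||ji]; first lia; last by rewrite ji in h2; lia.
move=> ji; exfalso; apply: (@cp_between delta i j Hd ji); left; lia.
Qed.

Lemma sdim_sub (V : finType) (A B : {set V}) : A \subset B -> (sdim A <= sdim B)%N.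
Proof. by move=> /subset_leq_card; rewrite /sdim; lia. Qed.

Lemma path_delta (V : finType) (delta : nat -> int) (s : seq {set V}) (D : {set V}) :
  path (lstep delta) D s -> pdelta delta D = pdelta delta (last D s) + (size s)%:Z.
Proof.
elim: s D => [|x s IH] D /=; first by rewrite addr0.
case/andP => /andP[_ /eqP h] /IH hI; rewrite h hI; lia.
Qed.

Lemma path_pos (V : finType) (delta : nat -> int) (s : seq {set V}) (D : {set V}) :
  cellular_perversity delta ->
  path (lstep delta) D s -> 0 <= pdelta delta (last D s) -> last D s \subset D.
Proof.
move=> Hd; elim: s D => [|x s IH] D /=; first by [].
case/andP => /andP[hi /eqP h] hp h0.
have hx := path_delta hp.
have sx := IH x hp h0.
have lt : (sdim x < sdim D)%N.
  apply: (cp_pos Hd); rewrite /pdelta in h hx h0; lia.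
case/orP: hi => hs.
  by have := sdim_sub hs; lia.
exact: subset_trans sx hs.
Qed.

Lemma path_neg (V : finType) (delta : nat -> int) (s : seq {set V}) (D : {set V}) :
  cellular_perversity delta ->
  path (lstep delta) D s -> pdelta delta D <= 0 -> D \subset last D s.
Proof.
move=> Hd; elim: s D => [|x s IH] D /=; first by [].
case/andP => /andP[hi /eqP h] hp h0.
have lt : (sdim D < sdim x)%N.
  apply: (cp_neg Hd); rewrite /pdelta in h h0; lia.
have sx := IH x hp ltac:(lia).
case/orP: hi => hs.
  exact: subset_trans hs sx.
by have := sdim_sub hs; lia.
Qed.

Lemma chain_ex (V : finType) (S L : {set V}) : S \subset L -> (0 < #|S|)%N ->
  exists F : nat -> {set V},
    [/\ forall j, (j < #|L|)%N -> #|F j| = j.+1,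
        forall j, F j \subset L,
        forall j, (j < #|S|)%N -> F j \subset S,
        forall j, (#|S| <= j.+1)%N -> S \subset F j &
        [/\ forall i j, (i <= j)%N -> F i \subset F j,
            F (#|S|.-1) = S & F (#|L|.-1) = L]].
Proof.
move=> SL S0.
set s := enum S ++ enum (L :\: S).
have us : uniq s.
  rewrite cat_uniq !enum_uniq /= andbT; apply/hasPn => x.
  by rewrite !mem_enum !inE => /andP[].
have ss : size s = #|L|.
  by rewrite size_cat -!cardE cardsDS //; have := subset_leq_card SL; lia.
have memS : forall x, (x \in s) = (x \in L).
  move=> x; rewrite mem_cat !mem_enum !inE.
  case xS: (x \in S) => /=; last by [].
  by rewrite (subsetP SL).
exists (fun j => [set x in take j.+1 s]); split.
- move=> j jL; rewrite cardsE; move/card_uniqP: (take_uniq j.+1 us) => ->.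
  by rewrite size_takel // ss.
- by move=> j; apply/subsetP => x; rewrite inE => /mem_take; rewrite memS.
- move=> j jS; apply/subsetP => x; rewrite inE takel_cat ?size_enum_set.
    by move/mem_take; rewrite mem_enum.
  by rewrite -cardE.
- move=> j jS; apply/subsetP => x xS; rewrite inE take_cat -cardE.
  case: ifP => h; first lia.
  by rewrite mem_cat mem_enum xS.
split.
- move=> i j ij; apply/subsetP => x; rewrite !inE => hx.
  by rewrite -(take_takel s (_ : i.+1 <= j.+1)%N) in hx; [apply: mem_take hx|].
- apply/setP => x; rewrite inE prednK // take_size_cat; first by rewrite mem_enum.
  by rewrite -cardE.
- apply/setP => x; rewrite inE prednK; last by have := subset_leq_card SL; lia.
  by rewrite -ss take_size memS.
Qed.

Lemma part_a (V : finType) (X : {set {set V}}) (delta : nat -> int) (S L D E : {set V}) :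
  simplicial_complex X -> cellular_perversity delta ->
  S \subset L -> S \in X -> L \in X -> (D = S \/ D = L) -> (E = S \/ E = L) ->
  pdelta delta E <= pdelta delta D ->
  exists s : seq {set V},
       [/\ all (mem X) s, path (lstep delta) D s, last D s = E &
           all (fun F => incident D F && incident F E) (D :: s)].
Proof.
move=> [X0 Xcl] [d0 Hd] SL SX LX hD hE hde.
have S0 : (0 < #|S|)%N by rewrite card_gt0; apply: contraNneq X0 => <-.
have [F [Fc FL FS SF [Fm FSS FLL]]] := chain_ex SL S0.
set M := #|L|.-1.
have LS := subset_leq_card SL.
have L0 : (0 < #|L|)%N by lia.
have Fdim : forall j, (j <= M)%N -> sdim (F j) = j.
  by move=> j jM; rewrite /sdim Fc //; lia.
have FX : forall j, (j <= M)%N -> F j \in X.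
  move=> j jM; apply: (Xcl L) => //; rewrite -card_gt0 Fc //; lia.
have Yinc : forall Y j, (Y = S \/ Y = L) -> incident Y (F j) && incident (F j) Y.
  move=> Y j [->|->]; rewrite /incident.
    case: (ltnP j #|S|) => h; first by rewrite FS // orbT.
    by rewrite SF //; lia.
  by rewrite FL orbT.
have Ydim : forall Y, (Y = S \/ Y = L) -> (sdim Y <= M)%N /\ F (sdim Y) = Y.
  by move=> Y [->|->]; rewrite /sdim /M; split => //; lia.
have [DM FD] := Ydim D hD.
have [EM FE] := Ydim E hE.
have Finc : forall j, incident D (F j) && incident (F j) E.
  move=> j; have /andP[-> _] := Yinc D j hD; by have /andP[_ ->] := Yinc E j hE.
have [a [a0 [Hr [Hi Hs]]]] := Hd M.
set d := pdelta delta D; set e := pdelta delta E.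
have hdr := Hr _ DM; have her := Hr _ EM.
have claim : forall n : nat, n%:Z <= d - e -> exists j, [/\ (j <= M)%N, delta j = d - n%:Z &
   exists s : seq {set V}, [/\ all (mem X) s, path (lstep delta) D s, last D s = F j &
           all (fun F => incident D F && incident F E) (D :: s)]].
  elim=> [|n IH] hn.
    exists (sdim D); split => //; first by rewrite subr0.
    exists [::]; split => //=.
    rewrite andbT; have := Finc (sdim D); rewrite FD; exact.
  have [j [jM dj [s [sX sp sl si]]]] := IH ltac:(lia).
  have [j' j'M dj'] : exists2 j' : nat, (j' <= M)%N & delta j' = d - n.+1%:Z.
    apply: Hs; rewrite /d /e /pdelta in hdr her hn *; lia.
  exists j'; split => //; exists (rcons s (F j')); split.
  - by rewrite all_rcons sX andbT; apply: FX.
  - rewrite rcons_path sp sl /lstep /pdelta !Fdim // dj dj'.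
    have -> : (d - n%:Z == d - n.+1%:Z + 1) by apply/eqP; lia.
    rewrite andbT /incident.
    case: (leqP j j') => h; first by rewrite Fm.
    apply/orP; right; apply: Fm; exact: ltnW.
  - by rewrite last_rcons.
  - by rewrite -rcons_cons all_rcons si Finc.
have hab : (absz (d - e))%:Z = d - e by rewrite abszE ger0_norm // subr_ge0.
have [j [jM dj [s [sX sp sl si]]]] := claim (absz (d - e)) ltac:(rewrite hab; lia).
rewrite hab in dj.
have je : j = sdim E.
  apply: Hi => //; rewrite dj /e /pdelta; lia.
by exists s; split => //; rewrite sl je FE.
Qed.

Theorem lemma1p2p3 (V : finType) (X : {set {set V}}) (delta : nat -> int) :
  simplicial_complex X -> sc_connected X -> cellular_perversity delta ->
  (* (a) *)
  (forall D E, D \in X -> E \in X -> incident D E ->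
     pdelta delta D >= pdelta delta E ->
     lge X delta D E /\
     exists s : seq {set V},
       [/\ all (mem X) s, path (lstep delta) D s, last D s = E &
           all (fun F => incident D F && incident F E) (D :: s)]) /\
  (* (b) *)
  (forall D E, D \in X -> E \in X -> lge X delta D E ->
     (pdelta delta E <= pdelta delta D /\ 0 <= pdelta delta E) \/
     (pdelta delta D <= 0 /\ pdelta delta E <= pdelta delta D) ->
     incident D E) /\
  (* (c) *)
  (forall D E, D \in X -> E \in X -> lgt X delta D E -> ~~ incident D E ->
     (pdelta delta D > 0 /\ pdelta delta E < 0) /\
     (pdelta delta D - pdelta delta E = 2 ->
        pdelta delta D = 1 /\ pdelta delta E = -1)).
Proof.
move=> HX _ Hd.
have partb : forall D E, lge X delta D E ->
     (pdelta delta E <= pdelta delta D /\ 0 <= pdelta delta E) \/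
     (pdelta delta D <= 0 /\ pdelta delta E <= pdelta delta D) ->
     incident D E.
  move=> D E [s [_ [sp sl]]] [[_ h]|[h _]]; rewrite /incident.
    by rewrite -sl in h *; rewrite (path_pos Hd sp h) orbT.
  by rewrite -sl (path_neg Hd sp h).
split; last split.
- move=> D E DX EX hi hde.
  have [s hs] : exists s : seq {set V},
       [/\ all (mem X) s, path (lstep delta) D s, last D s = E &
           all (fun F => incident D F && incident F E) (D :: s)].
    case/orP: hi => h.
      by apply: (part_a (S:=D) (L:=E)) => //; auto.
    by apply: (part_a (S:=E) (L:=D)) => //; auto.
  case: hs => h1 h2 h3 h4; split; first by exists s.
  by exists s.
- by move=> D E _ _; apply: partb.
- move=> D E _ _ [[s [sa [sp sl]]] _] ni.
  have hd := path_delta sp; rewrite sl in hd.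
  have h1 : ~ (pdelta delta E <= pdelta delta D /\ 0 <= pdelta delta E).
    move=> h; have ib : incident D E by apply: partb; [by exists s | left].
    by rewrite ib in ni.
  have h2 : ~ (pdelta delta D <= 0 /\ pdelta delta E <= pdelta delta D).
    move=> h; have ib : incident D E by apply: partb; [by exists s | right].
    by rewrite ib in ni.
  split; first lia.
  lia.
Qed.
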